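(* Let $P$ be a set of $n$ points in the plane in general position with $n$ even, and fix a direction (horizontal axis) such that no two points of $P$ have the same horizontal coordinate. Let $C$ be a connected component of the underlying graph of $P$, with vertex set $V(C)$ of size $m$. Then a vertex $v\in V(C)$ is among the $m/2$ leftmost points of $V(C)$ if and only if it is among the $n/2$ leftmost points of $P$; equivalently, the $m/2$ leftmost points of $V(C)$ are among the $n/2$ leftmost points of $P$ and the $m/2$ rightmost points of $V(C)$ are among the $n/2$ rightmost points of $P$.
   Context: Points are in general position if no three are collinear. For a finite set $P$ of $n$ points in general position with $n$ even, a halving line of $P$ is a line through two points of $P$ that has exactly $(n-2)/2$ points of $P$ strictly on each side. The underlying graph of $P$ has vertex set $P$, and two points are adjacent if and only if the line through them is a halving line of $P$. ''Leftmost'' refers to ordering by the horizontal coordinate in the fixed direction. *)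

(* Defs.v *)
From HB Require Import structures.
From mathcomp Require Import all_boot all_order all_algebra.
Set Implicit Arguments. Unset Strict Implicit. Unset Printing Implicit Defensive.
Import Order.TTheory GRing.Theory Num.Theory.
Local Open Scope ring_scope.

Section Halving.
Variable R : realFieldType.

(* orientation determinant of (a, b, c): > 0 iff c is strictly left of the
   directed line a -> b, < 0 iff strictly right, 0 iff collinear *)
Definition orient (a b c : R * R) : R :=
  (b.1 - a.1) * (c.2 - a.2) - (b.2 - a.2) * (c.1 - a.1).

Definition general_position (n : nat) (p : 'I_n -> R * R) : Prop :=
  injective p /\
  forall i j k : 'I_n, i != j -> j != k -> i != k -> orient (p i) (p j) (p k) != 0.

Definition halving (n : nat) (p : 'I_n -> R * R) : rel 'I_n :=
  fun i j =>
    [&& i != j,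
        #|[set k | 0 < orient (p i) (p j) (p k)]| == ((n - 2)./2)%N &
        #|[set k | orient (p i) (p j) (p k) < 0]| == ((n - 2)./2)%N].

Definition nleft (n : nat) (p : 'I_n -> R * R) (S : {set 'I_n}) (v : 'I_n) : nat :=
  #|[set u in S | (p u).1 < (p v).1]|.

End Halving.

(* Main.v *)
Require Import Defs.
From HB Require Import structures.
From mathcomp Require Import all_boot all_order all_algebra.
From mathcomp Require Import zify ring.
Set Warnings "-all".
Set Implicit Arguments. Unset Strict Implicit. Unset Printing Implicit Defensive.
Import Order.TTheory GRing.Theory Num.Theory.
Local Open Scope ring_scope.

Definition sl (R : realFieldType) n (p : 'I_n -> R * R) (v w : 'I_n) : R :=
  ((p w).2 - (p v).2) / ((p w).1 - (p v).1).

Lemma xneq (R : realFieldType) n (p : 'I_n -> R * R)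
  (hx : injective (fun i => (p i).1)) u v : u != v -> (p u).1 - (p v).1 != 0.
Proof. by move=> uv; rewrite subr_eq0; apply: contra uv => /eqP /hx ->. Qed.

Lemma orient_sl (R : realFieldType) n (p : 'I_n -> R * R)
  (hx : injective (fun i => (p i).1)) v u w : u != v -> w != v ->
  orient (p v) (p u) (p w) =
   ((p u).1 - (p v).1) * ((p w).1 - (p v).1) * (sl p v w - sl p v u).
Proof.
move=> uv wv; have hu := xneq hx uv; have hw := xneq hx wv.
rewrite /orient /sl; field; by apply/andP.
Qed.

Lemma orient_swap (R : realFieldType) (a b c : R * R) : orient b a c = - orient a b c.
Proof. rewrite /orient; ring. Qed.

Lemma orient_aba (R : realFieldType) (a b : R * R) : orient a b a = 0.
Proof. rewrite /orient; ring. Qed.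

Section Comb.
Variables (R : realFieldType) (T : finType) (s : T -> R) (col : pred T).

Definition Kc (S : {set T}) (u : T) : nat :=
  #|[set w in S | if col w then s w < s u else s u < s w]|.

Lemma card_split (S : {set T}) z (P : pred T) : z \in S ->
  #|[set u in S | P u]| = (P z + #|[set u in S :\ z | P u]|)%N.
Proof.
move=> zS; rewrite (cardsD1 z [set u in S | P u]) !inE zS /=; congr (_ + _)%N.
by apply: eq_card => u; rewrite !inE andbA.
Qed.

Lemma eq_setc (A : {set T}) (P Q : pred T) : {in A, P =1 Q} ->
  [set u in A | P u] = [set u in A | Q u].
Proof. by move=> e; apply/setP => u; rewrite !inE; case: (boolP (u \in A)) => // uA; rewrite e. Qed.

Lemma CL k : forall S : {set T}, #|S| = k -> {in S &, injective s} -> forall h,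
 (#|[set u in S | col u & Kc S u == h]| + (h < #|[set u in S | ~~ col u]|)
  = #|[set u in S | ~~ col u & Kc S u == h]| + (h < #|[set u in S | col u]|))%N.
Proof.
elim: k => [|k IH] S cS inj h.
  move/eqP: cS; rewrite cards_eq0 => /eqP ->.
  by rewrite !(eq_card0 (A := [set u in set0 | _])) //= => u; rewrite !inE.
have [z0 z0S] : exists z, z \in S by apply/set0Pn; rewrite -card_gt0 cS.
have [zm zmS0 zmax0] := @arg_maxP _ _ _ z0 (mem S) s z0S.
have zmS : zm \in S by exact: zmS0.
have zmax : forall w, w \in S -> s w <= s zm by move=> w wS; exact: zmax0.
set S' := S :\ zm.
have cS' : #|S'| = k by move: cS; rewrite (cardsD1 zm S) zmS add1n => -[].
have inj' : {in S' &, injective s}.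
  by move=> a b; rewrite !inE => /andP[_ aS] /andP[_ bS]; apply: inj.
have ltz : forall u, u \in S' -> s u < s zm.
  move=> u; rewrite !inE => /andP[uz uS]; rewrite lt_neqAle zmax // andbT.
  by apply/eqP => /(inj _ _ uS zmS) /eqP; rewrite (negbTE uz).
have Kz : Kc S zm = #|[set w in S' | col w]|.
  rewrite /Kc (@card_split S zm _ zmS) ltxx /= if_same add0n.
  apply: eq_card => w; rewrite !inE; case: (boolP (w \in S')) => wS /=.
    have := ltz w wS; rewrite !inE in wS; rewrite wS.
    by case: (col w) => // h1; rewrite ltNge ltW.
  by move: wS; rewrite !inE => /negbTE ->.
have KS : forall u, u \in S' -> Kc S u = ((~~ col zm) + Kc S' u)%N.
  move=> u uS; rewrite /Kc (@card_split S zm _ zmS); congr (_ + _)%N.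
  have := ltz u uS; case: (col zm) => h1 /=; last by rewrite h1.
  by rewrite ltNge ltW.
have CS : forall P : pred T, #|[set u in S | P u]| = (P zm + #|[set u in S' | P u]|)%N.
  by move=> P; apply: card_split.
rewrite !CS Kz.
case: (boolP (col zm)) => cz /=.
  have -> : [set u in S' | col u & Kc S u == h] = [set u in S' | col u & Kc S' u == h].
    by apply: eq_setc => u uS; rewrite KS // cz.
  have -> : [set u in S' | ~~ col u & Kc S u == h] = [set u in S' | ~~ col u & Kc S' u == h].
    by apply: eq_setc => u uS; rewrite KS // cz.
  have := IH S' cS' inj' h.
  rewrite !add0n !add1n.
  case: (ltngtP h #|[set w in S' | col w]|) => //= hh; lia.
have KS2 u (uS : u \in S') : Kc S u = (Kc S' u).+1 by rewrite KS // cz.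
case: h => [|h].
  have -> : [set u in S' | col u & Kc S u == 0%N] = set0.
    by apply/setP => u; rewrite in_set0 in_set; case: (boolP (u \in S')) => uS //=; rewrite KS2 // andbF.
  have -> : [set u in S' | ~~ col u & Kc S u == 0%N] = set0.
    by apply/setP => u; rewrite in_set0 in_set; case: (boolP (u \in S')) => uS //=; rewrite KS2 // andbF.
  rewrite cards0 /=.
  by case: #|[set w in S' | col w]|.
have -> : [set u in S' | col u & Kc S u == h.+1] = [set u in S' | col u & Kc S' u == h].
  by apply: eq_setc => u uS; rewrite KS // cz.
have -> : [set u in S' | ~~ col u & Kc S u == h.+1] = [set u in S' | ~~ col u & Kc S' u == h].
  by apply: eq_setc => u uS; rewrite KS // cz.
have := IH S' cS' inj' h.
rewrite !add0n !add1n ltnS.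
case: (ltngtP h.+1 #|[set w in S' | col w]|) => //= hh;
case: (ltngtP h #|[set w in S' | col w]|) => //= hh'; lia.
Qed.
End Comb.


Lemma card_part (T : finType) (S : {set T}) (P : pred T) :
  (#|[set u in S | P u]| + #|[set u in S | ~~ P u]| = #|S|)%N.
Proof.
rewrite -(cardsID [set u | P u] S); congr (_ + _)%N; apply: eq_card => u; rewrite !inE //; exact: andbC.
Qed.

Lemma card_sum (T : finType) (S : {set T}) (P : pred T) :
  #|[set u in S | P u]| = (\sum_(u in S) (P u : nat))%N.
Proof.
rewrite -sum1_card (eq_bigl (fun u => (u \in S) && P u)); last by move=> u; rewrite !inE.
rewrite big_mkcondr /=; apply: eq_bigr => u _; by case: (P u).
Qed.

Section Geo.
Variables (R : realFieldType) (n : nat) (p : 'I_n -> R * R).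

Definition colv (v w : 'I_n) := (p v).1 < (p w).1.
Definition Kv (v u : 'I_n) := Kc (sl p v) (colv v) [set~ v] u.

Lemma Kset (hx : injective (fun i => (p i).1)) v u : u != v ->
  [set w in [set~ v] | if colv v w then sl p v w < sl p v u else sl p v u < sl p v w]
  = if colv v u then [set k | orient (p v) (p u) (p k) < 0]
    else [set k | 0 < orient (p v) (p u) (p k)].
Proof.
move=> uv; apply/setP => w.
have hu := xneq hx uv.
have ca : colv v u = (0 < (p u).1 - (p v).1) by rewrite /colv subr_gt0.
rewrite ca; set a := (p u).1 - (p v).1 in hu ca *.
case: (eqVneq w v) => [->|wv].
  by case: (0 < a); rewrite !inE eqxx orient_aba ltxx.
have hw := xneq hx wv.
have cb : colv v w = (0 < (p w).1 - (p v).1) by rewrite /colv subr_gt0.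
set b := (p w).1 - (p v).1 in hw cb.
have [a0|a0] : a < 0 \/ 0 < a by move: hu; rewrite neq_lt => /orP.
  rewrite ltNge (ltW a0) /= !inE wv /= cb (orient_sl hx uv wv) -/a -/b -mulrA nmulr_rgt0 //.
  have [b0|b0] : b < 0 \/ 0 < b by move: hw; rewrite neq_lt => /orP.
    by rewrite ltNge (ltW b0) /= nmulr_rlt0 // subr_gt0.
  by rewrite b0 pmulr_rlt0 // subr_lt0.
rewrite a0 !inE wv /= cb (orient_sl hx uv wv) -/a -/b -mulrA pmulr_rlt0 //.
have [b0|b0] : b < 0 \/ 0 < b by move: hw; rewrite neq_lt => /orP.
  by rewrite ltNge (ltW b0) /= nmulr_rlt0 // subr_gt0.
by rewrite b0 pmulr_rlt0 // subr_lt0.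
Qed.


Lemma card_posneg (hgp : general_position p) v u : u != v ->
  addn #|[set k | 0 < orient (p v) (p u) (p k)]| #|[set k | orient (p v) (p u) (p k) < 0]| = subn n 2.
Proof.
move=> uv; case: hgp => inj gp.
rewrite -cardsUI.
have -> : [set k | 0 < orient (p v) (p u) (p k)] :&: [set k | orient (p v) (p u) (p k) < 0] = set0.
  apply/setP => k; rewrite !inE; apply/negbTE; rewrite negb_and -leNgt -leNgt.
  exact: le_total.
have -> : [set k | 0 < orient (p v) (p u) (p k)] :|: [set k | orient (p v) (p u) (p k) < 0]
   = ~: [set v; u].
  apply/setP => k; rewrite !inE negb_or.
  case: (eqVneq k v) => [->|kv]; first by rewrite orient_aba ltxx.
  case: (eqVneq k u) => [->|ku].
    by rewrite -(opprK (orient _ _ _)) -orient_swap orient_aba oppr0 ltxx.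
  have := gp v u k; rewrite eq_sym uv (eq_sym u) ku (eq_sym v) kv => /(_ isT isT isT).
  by rewrite neq_lt orbC.
rewrite cards0 addn0.
have := cardsC [set v; u]; rewrite cards2 card_ord eq_sym uv => H; lia.
Qed.

Lemma halving_sym i j : halving p i j = halving p j i.
Proof.
rewrite /halving eq_sym.
have -> : [set k | 0 < orient (p j) (p i) (p k)] = [set k | orient (p i) (p j) (p k) < 0].
  by apply/setP => k; rewrite !inE orient_swap oppr_gt0.
have -> : [set k | orient (p j) (p i) (p k) < 0] = [set k | 0 < orient (p i) (p j) (p k)].
  by apply/setP => k; rewrite !inE orient_swap oppr_lt0.
by case: (j != i) => //=; exact: andbC.
Qed.

Lemma halving_K (hgp : general_position p) (hx : injective (fun i => (p i).1))
  (h : nat) (hh : (n - 2 = h + h)%N) v u : u != v ->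
  halving p v u = (Kv v u == h).
Proof.
move=> uv; have cpn := card_posneg hgp uv.
rewrite /halving eq_sym uv /= /Kv /Kc (Kset hx uv).
case: (colv v u) => /=.
  move: cpn; set A := #|[set k | 0 < _]|; set B := #|[set k | _ < 0]| => cpn.
  by apply/idP/idP => [/andP[/eqP ? /eqP ?]|/eqP ?]; [apply/eqP| apply/andP; split; apply/eqP]; lia.
move: cpn; set A := #|[set k | 0 < _]|; set B := #|[set k | _ < 0]| => cpn.
by apply/idP/idP => [/andP[/eqP ? /eqP ?]|/eqP ?]; [apply/eqP| apply/andP; split; apply/eqP]; lia.
Qed.


Lemma pervertex (hgp : general_position p) (hx : injective (fun i => (p i).1))
  (h : nat) (hh : (n - 2 = h + h)%N) v :
  addn #|[set u | halving p v u & (p v).1 < (p u).1]| (h < nleft p setT v)%N =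
   addn #|[set u | halving p v u & (p u).1 < (p v).1]| (h < n.-1 - nleft p setT v)%N.
Proof.
have inj : {in [set~ v] &, injective (sl p v)}.
  move=> a b; rewrite !inE => av bv e; apply/eqP; apply/negPn/negP => ab.
  case: hgp => _ gp; have := gp v a b; rewrite eq_sym av ab eq_sym bv => /(_ isT isT isT).
  by rewrite (orient_sl hx av bv) e subrr mulr0 eqxx.
have := @CL _ _ (sl p v) (colv v) _ _ (erefl #|[set~ v]|) inj h.
have E1 : [set u | halving p v u & (p v).1 < (p u).1] =
   [set u in [set~ v] | colv v u & Kc (sl p v) (colv v) [set~ v] u == h].
  apply/setP => u; rewrite !inE; case: (eqVneq u v) => [->|uv] /=.
    by rewrite /halving eqxx.
  by rewrite (halving_K hgp hx hh uv) /Kv andbC.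
have E2 : [set u | halving p v u & (p u).1 < (p v).1] =
   [set u in [set~ v] | ~~ colv v u & Kc (sl p v) (colv v) [set~ v] u == h].
  apply/setP => u; rewrite !inE; case: (eqVneq u v) => [->|uv] /=.
    by rewrite /halving eqxx.
  rewrite (halving_K hgp hx hh uv) /Kv andbC /colv -leNgt le_eqVlt.
  have := xneq hx uv; rewrite subr_eq0 => /negbTE ->; done.
have E3 : #|[set u in [set~ v] | ~~ colv v u]| = nleft p setT v.
  apply: eq_card => u; rewrite !inE /colv -leNgt le_eqVlt.
  case: (eqVneq u v) => [->|uv] /=; first by rewrite ltxx.
  by have := xneq hx uv; rewrite subr_eq0 => /negbTE ->.
have E4 := card_part [set~ v] (colv v).
rewrite cardsC1 card_ord E3 in E4.
rewrite E1 E2 E3 => ->; congr (_ + _)%N; congr (_ < _)%N; lia.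
Qed.

End Geo.

Definition outd (R : realFieldType) n (p : 'I_n -> R * R) a :=
  #|[set u | halving p a u & (p a).1 < (p u).1]|.
Definition indd (R : realFieldType) n (p : 'I_n -> R * R) a :=
  #|[set u | halving p a u & (p u).1 < (p a).1]|.
Definition ef (R : realFieldType) n (p : 'I_n -> R * R) a b : bool :=
  halving p a b && ((p a).1 < (p b).1).

Unset Implicit Arguments.

Theorem mainTheorem7 (R : realFieldType) (n : nat) (p : 'I_n -> R * R)
  (hgp : general_position p)
  (heven : ~~ odd n)
  (hx : injective (fun i => (p i).1))
  (c : 'I_n) :
  let C := [set v | connect (halving p) c v] in
  forall v : 'I_n, v \in C ->
    ((nleft p C v < #|C|./2)%N <-> (nleft p [set: 'I_n] v < n./2)%N).
Proof.
move=> C v vC.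
have n2 : n = (n./2 + n./2)%N.
  by have := odd_double_half n; rewrite (negbTE heven) add0n -addnn.
set m2 := n./2 in n2 *.
have m2pos : (0 < m2)%N by have := ltn_ord v; lia.
set h := m2.-1.
have hh : (n - 2 = h + h)%N by rewrite /h; lia.
set f := fun u => nleft p [set: 'I_n] u.
have clos : forall a b, a \in C -> halving p a b -> b \in C.
  move=> a b; rewrite !inE => ca hab; apply: connect_trans ca _; exact: connect1.
have S1 : (\sum_(a in C) outd p a = \sum_(a in C) \sum_(b in C) (ef p a b : nat))%N.
  apply: eq_bigr => a aC; rewrite -card_sum /outd /ef; apply: eq_card => b; rewrite !inE.
  case hab: (halving p a b) => /=; last by rewrite andbF.
  by have := clos a b aC hab; rewrite inE => ->.
have S2 : (\sum_(a in C) indd p a = \sum_(a in C) \sum_(b in C) (ef p b a : nat))%N.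
  apply: eq_bigr => a aC; rewrite -card_sum /indd /ef; apply: eq_card => b; rewrite !inE halving_sym.
  case hab: (halving p b a) => /=; last by rewrite andbF.
  rewrite halving_sym in hab; by have := clos a b aC hab; rewrite inE => ->.
have S3 : (\sum_(a in C) outd p a = \sum_(a in C) indd p a)%N.
  by rewrite S1 S2 exchange_big.
have PV : (\sum_(a in C) (outd p a + (h < f a)) = \sum_(a in C) (indd p a + (h < n.-1 - f a)))%N.
  by apply: eq_bigr => a _; apply: pervertex.
rewrite !big_split /= S3 in PV; move/addnI: PV => PV.
have B1 : (\sum_(a in C) (h < f a)%N = \sum_(a in C) (~~ (f a < m2)%N : nat))%N.
  apply: eq_bigr => a _; congr (nat_of_bool _); apply/idP/idP; rewrite /h; lia.
have B2 : (\sum_(a in C) (h < n.-1 - f a)%N = \sum_(a in C) ((f a < m2)%N : nat))%N.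
  apply: eq_bigr => a _; congr (nat_of_bool _); apply/idP/idP; rewrite /h; lia.
rewrite B1 B2 -!card_sum in PV.
set CL := #|[set a in C | (f a < m2)%N]| in PV.
have cC : #|C| = CL.*2.
  by rewrite -(card_part C (fun a => (f a < m2)%N)) -/CL PV addnn.
rewrite cC doubleK.
have mono : forall a b, (p a).1 < (p b).1 -> (f a < f b)%N.
  move=> a b ab; apply: proper_card; apply/properP; split.
    by apply/subsetP => w; rewrite !inE => hw; apply: lt_trans hw ab.
  by exists a; rewrite !inE ?ab ?ltxx.
rewrite -/(f v); split.
  move=> hl; rewrite ltnNge; apply/negP => hv.
  suff : (CL <= nleft p C v)%N by lia.
  apply: subset_leq_card; apply/subsetP => u; rewrite !inE => /andP[uC fu]; rewrite uC /=.
  case: (ltgtP (p u).1 (p v).1) => // huv.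
    by have := mono _ _ huv; lia.
  by have := hx _ _ huv => e; rewrite e in fu; lia.
move=> fv.
have vCL : v \in [set a in C | (f a < m2)%N] by rewrite inE vC fv.
have : (nleft p C v <= #|[set a in C | (f a < m2)%N] :\ v|)%N.
  apply: subset_leq_card; apply/subsetP => u; rewrite !inE => /andP[uC uv].
  rewrite uC /=; apply/andP; split.
    by apply/eqP => e; rewrite e ltxx in uv.
  by have := mono _ _ uv; lia.
have := cardsD1 v [set a in C | (f a < m2)%N]; rewrite vCL -/CL; lia.
Qed.
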